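(* Consider a pairing heap built by an arbitrary sequence of the operations make-heap, insert, get-min, decrease-key and delete-min, starting from an empty heap, and let $n$ be its current number of elements and $N$ its current sticky size. Then the potential $\Phi$ of the heap is $O(N) = O(n)$, with the hidden constant independent of the heap and of the operation history.
   Context: A pairing heap is a heap-ordered rooted ordered tree (the ''general view''): each node stores a key, has zero or more children ordered from left to right, and every child has a strictly larger key than its parent. It is stored in the ''binary view'' via the leftmost-child/right-sibling correspondence: the left child of $x$ in the binary view is the leftmost child of $x$ in the general view, and the right child of $x$ in the binary view is the next sibling to the right of $x$ in the general view. Pairing two heap-ordered trees makes the root with the larger key the leftmost child of the other root. Operations: make-heap returns an empty heap; get-min returns the root key; insert creates a new node, which becomes the root if the heap is empty and otherwise is paired with the root; decrease-key$(p,y)$ (with $y$ strictly less than the current key of the node $p$) sets the key to $y$ and, if the node is not the root, detaches it (with its general-view subtree) from its parent and pairs it with the root; delete-min removes the root, then (first pass) pairs the root's former children in consecutive pairs from left to right, then (second pass) repeatedly pairs the two rightmost remaining trees until one tree remains. Sticky size: $N$ is initially $1$; after every heap operation, if $n \ge 2N$ then $N$ is doubled, and if $n \le N/2$ then $N$ is halved, where $n$ is the current number of elements. Let $\lg = \log_2$. For a node $x$, $|x|$ is the number of nodes in the subtree rooted at $x$ in the binary view, and $x_L$, $x_R$ are its left and right children in the binary view (a missing child has size $0$), so $|x| = |x_L|+|x_R|+1$. Node potential $\phi_x$: if $|x_L| > \lg N$ and $|x_R| > \lg N$, $x$ is large and $\phi_x = 400 + 100\lg|x|$; if $|x_L| \le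 \lg N < |x_R|$, $x$ is mixed and $\phi_x = 400 + 100\frac{|x_L|}{\lg N}\lg|x|$ (symmetrically, if $|x_R| \le \lg N < |x_L|$, $x$ is mixed and $\phi_x = 400 + 100\frac{|x_R|}{\lg N}\lg|x|$); if $|x_L|\le \lg N$ and $|x_R| \le \lg N$, $x$ is small and $\phi_x = 0$. Edge potential: an edge of the binary view joining a large node to its right child (in the binary view) that is also large has potential $-7$; all other edges have potential $0$. The potential of the heap is $\Phi = 900|N-n| + \sum_x \phi_x + (\text{sum of edge potentials})$. *)

(* Defs.v *)
From Stdlib Require Import Reals List Arith Bool.
Import ListNotations.
Open Scope R_scope.
Local Open Scope bool_scope.

(** General view: a node has an identity (used by decrease-key), a key and
    an ordered list of children (leftmost first). *)
Inductive tree : Type := Node (id : nat) (k : R) (cs : list tree).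

Definition tid (t : tree) : nat := match t with Node i _ _ => i end.
Definition tkey (t : tree) : R := match t with Node _ k _ => k end.

Definition link (a b : tree) : tree :=
  match a, b with
  | Node i ka ca, Node j kb cb =>
      if Rlt_dec kb ka then Node j kb (a :: cb) else Node i ka (b :: ca)
  end.

(** Binary view (leftmost-child / right-sibling). *)
Inductive btree : Type := BLeaf | BNode (l r : btree).

Fixpoint bin_node (t : tree) (right : btree) : btree :=
  match t with
  | Node _ _ cs =>
      BNode ((fix go (l : list tree) : btree :=
                match l with
                | [] => BLeaf
                | c :: rest => bin_node c (go rest)
                end) cs) right
  end.

Fixpoint bin_forest (ts : list tree) : btree :=
  match ts with
  | [] => BLeaf
  | t :: rest => bin_node t (bin_forest rest)
  end.

Definition bin_heap (h : option tree) : btree :=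
  match h with None => BLeaf | Some t => bin_forest [t] end.

Fixpoint bsize (b : btree) : nat :=
  match b with BLeaf => 0%nat | BNode l r => S (bsize l + bsize r) end.

Definition hsize (h : option tree) : nat := bsize (bin_heap h).

Fixpoint find (p : nat) (t : tree) : option tree :=
  match t with
  | Node i k cs =>
      if Nat.eqb i p then Some t else
      (fix go (l : list tree) : option tree :=
         match l with
         | [] => None
         | c :: r => match find p c with Some s => Some s | None => go r end
         end) cs
  end.

Fixpoint cut (p : nat) (t : tree) : tree :=
  match t with
  | Node i k cs =>
      Node i k ((fix go (l : list tree) : list tree :=
                   match l with
                   | [] => []
                   | c :: r => if Nat.eqb (tid c) p then go r else cut p c :: go r
                   end) cs)
  end.

Definition insert (c : nat) (x : R) (h : option tree) : option tree :=
  match h with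
  | None => Some (Node c x [])
  | Some r => Some (link r (Node c x []))
  end.

(** decrease-key(p, y); None when the operation is not applicable
    (p not in the heap, or y not strictly less than the key of p). *)
Definition decrease_key (p : nat) (y : R) (h : option tree) : option (option tree) :=
  match h with
  | None => None
  | Some (Node i k cs as r) =>
      if Nat.eqb i p then
        (if Rlt_dec y k then Some (Some (Node i y cs)) else None)
      else match find p r with
           | Some (Node j kp cp) =>
               if Rlt_dec y kp then Some (Some (link (cut p r) (Node j y cp)))
               else None
           | None => None
           end
  end.

Fixpoint pass1 (l : list tree) : list tree :=
  match l with
  | a :: b :: r => link a b :: pass1 r
  | _ => l
  end.

Fixpoint pass2 (l : list tree) : option tree :=
  match l with
  | [] => None
  | a :: r => match pass2 r with None => Some a | Some b => Some (link a b) end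
  end.

Definition delete_min (r : tree) : option tree :=
  match r with Node _ _ cs => pass2 (pass1 cs) end.

(** Sticky size update after an operation, n = current number of elements.
    N is always a power of two and is never halved below 1. *)
Definition sticky_update (n N : nat) : nat :=
  if Nat.leb (2 * N) n then (2 * N)%nat
  else if Nat.leb (2 * n) N && Nat.leb 2 N then Nat.div2 N
  else N.

(** States reachable by operation histories: (heap, N, next fresh id). *)
Inductive reachable : option tree -> nat -> nat -> Prop :=
| R_make_heap : reachable None (sticky_update 0 1) 0
| R_get_min : forall h N c, reachable h N c ->
    reachable h (sticky_update (hsize h) N) c
| R_insert : forall h N c x, reachable h N c ->
    reachable (insert c x h) (sticky_update (hsize (insert c x h)) N) (S c)
| R_decrease_key : forall h N c p y h', reachable h N c ->
    decrease_key p y h = Some h' ->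
    reachable h' (sticky_update (hsize h') N) c
| R_delete_min : forall r N c, reachable (Some r) N c ->
    reachable (delete_min r) (sticky_update (hsize (delete_min r)) N) c.

Definition lg (x : R) : R := ln x / ln 2.

Definition node_pot (N : nat) (l r : btree) : R :=
  let g := lg (INR N) in
  let sl := INR (bsize l) in
  let sr := INR (bsize r) in
  let s := INR (S (bsize l + bsize r)) in
  if Rlt_dec g sl then
    (if Rlt_dec g sr then 400 + 100 * lg s
     else 400 + 100 * (sr / g) * lg s)
  else
    (if Rlt_dec g sr then 400 + 100 * (sl / g) * lg s
     else 0).

Definition is_large (N : nat) (b : btree) : bool :=
  match b with
  | BLeaf => false
  | BNode l r =>
      let g := lg (INR N) in
      if Rlt_dec g (INR (bsize l)) then
        (if Rlt_dec g (INR (bsize r)) then true else false)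
      else false
  end.

Fixpoint tree_pot (N : nat) (b : btree) : R :=
  match b with
  | BLeaf => 0
  | BNode l r =>
      node_pot N l r + tree_pot N l + tree_pot N r
      + (if is_large N b && is_large N r then -7 else 0)
  end.

Definition Phi (N : nat) (h : option tree) : R :=
  900 * Rabs (INR N - INR (hsize h)) + tree_pot N (bin_heap h).

(* Main.v *)
Require Import Defs.
From Stdlib Require Import Reals.
Open Scope R_scope.
From Stdlib Require Import List Lia Lra Permutation Arith.
Import ListNotations.


Fixpoint findl (p : nat) (l : list tree) : option tree :=
  match l with [] => None | c :: r => match Defs.find p c with Some s => Some s | None => findl p r end end.
Fixpoint cutl (p : nat) (l : list tree) : list tree :=
  match l with [] => [] | c :: r => if Nat.eqb (tid c) p then cutl p r else cut p c :: cutl p r end.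
Lemma find_eq p i k cs : Defs.find p (Node i k cs) = if Nat.eqb i p then Some (Node i k cs) else findl p cs.
Proof. simpl. destruct (i =? p)%nat; [reflexivity|]. induction cs as [|c r IH]; simpl; [reflexivity|].
 rewrite IH. reflexivity. Qed.
Lemma cut_eq p i k cs : cut p (Node i k cs) = Node i k (cutl p cs).
Proof. simpl. f_equal. induction cs as [|c r IH]; simpl; [reflexivity|].
 rewrite IH. reflexivity. Qed.
Lemma bin_node_eq i k cs r : bin_node (Node i k cs) r = BNode (bin_forest cs) r.
Proof. reflexivity. Qed.

Fixpoint tree_ind2 (P : tree -> Prop)
  (H : forall i k cs, Forall P cs -> P (Node i k cs)) (t : tree) : P t :=
  match t with Node i k cs => H i k cs
    ((fix go (l : list tree) : Forall P l :=
       match l with [] => Forall_nil P | c :: r => Forall_cons c (tree_ind2 P H c) (go r) end) cs)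
  end.

Fixpoint tids (t : tree) : list nat :=
  match t with Node i _ cs => i :: (fix go (l : list tree) : list nat :=
     match l with [] => [] | c :: r => tids c ++ go r end) cs end.
Fixpoint fids (l : list tree) : list nat :=
  match l with [] => [] | c :: r => tids c ++ fids r end.
Lemma tids_eq i k cs : tids (Node i k cs) = i :: fids cs.
Proof. reflexivity. Qed.

Lemma bsize_node : forall t r, bsize (bin_node t r) = (length (tids t) + bsize r)%nat.
Proof.
  apply (tree_ind2 (fun t => forall r, bsize (bin_node t r) = (length (tids t) + bsize r)%nat)).
  intros i k cs H r. rewrite bin_node_eq, tids_eq. simpl. f_equal. f_equal.
  induction H as [|c l Hc Hl IH]; simpl; [reflexivity|]. rewrite Hc, IH, length_app. reflexivity.
Qed.

Lemma bsize_forest : forall l, bsize (bin_forest l) = length (fids l).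
Proof. induction l as [|c r IH]; simpl; [reflexivity|]. rewrite bsize_node, IH, length_app. reflexivity. Qed.

Definition hids (h : option tree) : list nat := match h with None => [] | Some t => tids t end.

Lemma hsize_ids h : hsize h = length (hids h).
Proof. destruct h as [t|]; [|reflexivity]. unfold hsize, bin_heap, bin_forest. rewrite bsize_node. simpl. lia. Qed.

Lemma link_perm a b : Permutation (tids (link a b)) (tids a ++ tids b).
Proof.
  destruct a as [i ka ca], b as [j kb cb]. unfold link.
  destruct (Rlt_dec kb ka).
  - rewrite (tids_eq j kb), (tids_eq j kb cb).
    exact (Permutation_middle (tids (Node i ka ca)) (fids cb) j).
  - rewrite (tids_eq i ka), (tids_eq i ka ca).
    change (Permutation (i :: (tids (Node j kb cb) ++ fids ca)) ((i :: fids ca) ++ tids (Node j kb cb))).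
    simpl app at 2. apply perm_skip. apply Permutation_app_comm.
Qed.

Lemma pass1_perm : forall l, Permutation (fids (pass1 l)) (fids l).
Proof.
  assert (H : forall l, Permutation (fids (pass1 l)) (fids l) /\
             forall a, Permutation (fids (pass1 (a :: l))) (fids (a :: l))).
  { induction l as [|b r [IH1 IH2]]; split.
    - reflexivity.
    - intros a. reflexivity.
    - apply IH2.
    - intros a. simpl pass1. simpl fids. rewrite app_assoc.
      apply Permutation_app; [apply link_perm|apply IH1]. }
  apply H.
Qed.

Lemma pass2_perm : forall l, Permutation (hids (pass2 l)) (fids l).
Proof.
  induction l as [|a r IH]; simpl; [reflexivity|].
  destruct (pass2 r) as [b|] eqn:E; simpl in *.
  - rewrite link_perm. apply Permutation_app; [reflexivity|exact IH].
  - apply Permutation_nil in IH. rewrite IH, app_nil_r. reflexivity.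
Qed.

Lemma delete_min_perm i k cs : Permutation (hids (delete_min (Node i k cs))) (fids cs).
Proof. simpl delete_min. rewrite pass2_perm. apply pass1_perm. Qed.
Section P.
Variable p : nat.

Lemma find_none : forall t, Defs.find p t = None -> ~ In p (tids t).
Proof.
  apply (tree_ind2 (fun t => Defs.find p t = None -> ~ In p (tids t))). intros i k cs H. rewrite find_eq, tids_eq.
  destruct (Nat.eqb_spec i p) as [E|E]; [discriminate|]. intros Hf [Hi|Hin]; [congruence|].
  induction H as [|c l Hc Hl IH]; simpl in *; [contradiction|].
  destruct (Defs.find p c); [discriminate|]. apply in_app_or in Hin as [Hin|Hin].
  - exact (Hc eq_refl Hin).
  - exact (IH Hf Hin).
Qed.

Lemma find_some : forall t s, Defs.find p t = Some s -> tid s = p.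
Proof.
  apply (tree_ind2 (fun t => forall s, Defs.find p t = Some s -> tid s = p)).
  intros i k cs H s. rewrite find_eq.
  destruct (Nat.eqb_spec i p) as [E|E]; [intros Hs; inversion Hs; subst; reflexivity|].
  clear E. induction H as [|c l Hc Hl IH]; simpl in *; [discriminate|].
  destruct (Defs.find p c) eqn:F; [intros Hs; inversion Hs; subst; apply Hc; reflexivity|exact IH].
Qed.

Lemma cutl_id : forall l, Forall (fun t => ~ In p (tids t) -> cut p t = t) l ->
  ~ In p (fids l) -> cutl p l = l.
Proof.
  intros l H. induction H as [|c l Hc Hl IH]; simpl; [reflexivity|]. intros Hn.
  destruct c as [i k cs]. simpl tid.
  destruct (Nat.eqb_spec i p) as [E|E].
  - exfalso. apply Hn. apply in_or_app. left. rewrite tids_eq. left. exact E.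
  - rewrite Hc, IH; [reflexivity| |]; intro; apply Hn; apply in_or_app; auto.
Qed.

Lemma cut_id : forall t, ~ In p (tids t) -> cut p t = t.
Proof.
  apply (tree_ind2 (fun t => ~ In p (tids t) -> cut p t = t)). intros i k cs H Hn. rewrite cut_eq, cutl_id; [reflexivity|exact H|].
  rewrite tids_eq in Hn. intro; apply Hn; right; assumption.
Qed.

Lemma cutl_id' l : ~ In p (fids l) -> cutl p l = l.
Proof. apply cutl_id. apply Forall_forall. intros. apply cut_id. assumption. Qed.

Lemma nodup_disj (a b : list nat) x : NoDup (a ++ b) -> In x a -> ~ In x b.
Proof.
  induction a as [|y a IH]; simpl; [tauto|]. intros H [E|Hin] Hb.
  - subst y. apply NoDup_cons_iff in H as [H _]. apply H, in_or_app; right; exact Hb.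
  - apply NoDup_cons_iff in H as [_ H]. exact (IH H Hin Hb).
Qed.

Lemma key : forall t, NoDup (tids t) -> tid t <> p -> forall s, Defs.find p t = Some s ->
  Permutation (tids t) (tids (cut p t) ++ tids s).
Proof.
  apply (tree_ind2 (fun t => NoDup (tids t) -> tid t <> p -> forall s, Defs.find p t = Some s ->
  Permutation (tids t) (tids (cut p t) ++ tids s))).
  intros i k cs H Hnd Hti s. simpl in Hti. rewrite find_eq, cut_eq, !tids_eq.
  destruct (Nat.eqb_spec i p) as [E|E]; [congruence|]. intros Hf.
  simpl. apply perm_skip. rewrite tids_eq in Hnd. apply NoDup_cons_iff in Hnd as [_ Hnd].
  clear E Hti. revert Hnd Hf.
  induction H as [|c l Hc Hl IH]; simpl; intros Hnd Hf; [discriminate|].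
  destruct (Defs.find p c) as [s'|] eqn:F.
  - inversion Hf; subst s'. assert (Hts := find_some _ _ F).
    assert (Hps : In p (tids s)) by (destruct s; rewrite tids_eq; left; exact Hts).
    destruct (Nat.eqb_spec (tid c) p) as [E|E].
    + assert (cs_eq : s = c).
      { destruct c as [j kc cc]. rewrite find_eq in F. simpl in E. subst j.
        rewrite Nat.eqb_refl in F. inversion F; reflexivity. }
      subst c. assert (Hn : ~ In p (fids l)) by exact (nodup_disj _ _ _ Hnd Hps).
      rewrite cutl_id' by exact Hn. apply Permutation_app_comm.
    + assert (Hp := Hc (NoDup_app_remove_r _ _ Hnd) E s eq_refl).
      assert (Hn : ~ In p (fids l)).
      { apply (nodup_disj _ _ _ Hnd). apply (Permutation_in _ (Permutation_sym Hp)).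
        apply in_or_app; right; exact Hps. }
      rewrite cutl_id' by exact Hn. simpl.
      rewrite Hp at 1. rewrite <- !app_assoc. apply Permutation_app_head. apply Permutation_app_comm.
  - assert (Hn := find_none _ F). rewrite cut_id by exact Hn.
    destruct (Nat.eqb_spec (tid c) p) as [E|E].
    + exfalso. apply Hn. destruct c; rewrite tids_eq; left; exact E.
    + simpl. rewrite <- app_assoc. apply Permutation_app_head.
      exact (IH (NoDup_app_remove_l _ _ Hnd) Hf).
Qed.
End P.

Lemma dk_perm p y h h' : NoDup (hids h) -> decrease_key p y h = Some h' ->
  Permutation (hids h') (hids h).
Proof.
  destruct h as [[i k cs]|]; intros Hnd; [|discriminate].
  unfold decrease_key.
  destruct (Nat.eqb_spec i p) as [E|E].
  - destruct (Rlt_dec y k); [|discriminate]. intros H; injection H as <-. reflexivity.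
  - destruct (Defs.find p (Node i k cs)) as [[j kp cp]|] eqn:F; [|discriminate].
    destruct (Rlt_dec y kp); [|discriminate]. intros H; injection H as <-.
    change (Permutation (tids (link (cut p (Node i k cs)) (Node j y cp))) (tids (Node i k cs))).
    rewrite link_perm. rewrite (key p (Node i k cs) Hnd E _ F). rewrite !(tids_eq j). reflexivity.
Qed.

Lemma sticky n0 n N : (1 <= N)%nat -> (n0 < 2 * N)%nat -> (N <= 2 * n0 + 2)%nat ->
  (n <= n0 + 1)%nat -> (n0 <= n + 1)%nat ->
  let N' := sticky_update n N in (1 <= N')%nat /\ (n < 2 * N')%nat /\ (N' <= 2 * n + 2)%nat.
Proof.
  intros H1 H2 H3 H4 H5 N'. unfold N', sticky_update.
  destruct (2 * N <=? n)%nat eqn:E1; [apply Nat.leb_le in E1; lia|apply Nat.leb_gt in E1].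
  destruct (2 * n <=? N)%nat eqn:E2; [apply Nat.leb_le in E2|apply Nat.leb_gt in E2];
  destruct (2 <=? N)%nat eqn:E3;
  try (apply Nat.leb_le in E3); try (apply Nat.leb_gt in E3); simpl; try lia.
  apply Nat.leb_gt in E3. pose proof (Nat.div2_odd N) as D. destruct (Nat.odd N); simpl in D; lia.
Qed.

Definition inv (h : option tree) (N c : nat) : Prop :=
  NoDup (hids h) /\ (forall x, In x (hids h) -> (x < c)%nat) /\
  (1 <= N)%nat /\ (length (hids h) < 2 * N)%nat /\ (N <= 2 * length (hids h) + 2)%nat.

Lemma inv_step h N c h' c' : inv h N c ->
  NoDup (hids h') -> (forall x, In x (hids h') -> (x < c')%nat) ->
  (length (hids h') <= length (hids h) + 1)%nat -> (length (hids h) <= length (hids h') + 1)%nat ->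
  inv h' (sticky_update (hsize h') N) c'.
Proof.
  intros (_ & _ & H1 & H2 & H3) Hnd Hlt H4 H5. rewrite hsize_ids.
  destruct (sticky _ _ _ H1 H2 H3 H4 H5) as (? & ? & ?). repeat split; auto.
Qed.

Lemma reach_inv h N c : reachable h N c -> inv h N c.
Proof.
  induction 1 as [|h N c R IH|h N c x R IH|h N c p y h' R IH D|r N c R IH].
  - replace (sticky_update 0 1) with 1%nat by reflexivity.
    split; [constructor|split; [intros x []|simpl; lia]].
  - apply (inv_step h N c h c IH); try apply IH; lia.
  - destruct IH as (Hnd & Hlt & H).
    assert (P : Permutation (hids (insert c x h)) (hids h ++ [c])).
    { destruct h as [t|]; simpl; [apply link_perm|reflexivity]. }
    eapply inv_step; [split; [exact Hnd|split; [exact Hlt|exact H]]| | | |].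
    + rewrite P. apply NoDup_app; auto. constructor; [simpl; tauto|constructor].
      intros a Ha [E|[]]. subst. specialize (Hlt _ Ha). lia.
    + intros z Hz. apply (Permutation_in _ P) in Hz. apply in_app_or in Hz as [Hz|[E|[]]].
      * specialize (Hlt _ Hz); lia.
      * lia.
    + rewrite (Permutation_length P), length_app; simpl; lia.
    + rewrite (Permutation_length P), length_app; simpl; lia.
  - destruct IH as (Hnd & Hlt & H). assert (P := dk_perm _ _ _ _ Hnd D).
    eapply inv_step; [split; [exact Hnd|split; [exact Hlt|exact H]]| | | |].
    + apply Permutation_sym in P. exact (Permutation_NoDup P Hnd).
    + intros z Hz. apply Hlt. exact (Permutation_in _ P Hz).
    + rewrite (Permutation_length P); lia.
    + rewrite (Permutation_length P); lia.
  - assert (IH' := IH). destruct IH' as (Hnd & Hlt & _). destruct r as [i k cs].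
    assert (P := delete_min_perm i k cs).
    change (hids (Some (Node i k cs))) with (tids (Node i k cs)) in *. rewrite tids_eq in Hnd, Hlt.
    apply NoDup_cons_iff in Hnd as [_ Hnd2].
    apply (inv_step _ _ _ _ c IH).
    + apply Permutation_sym in P. exact (Permutation_NoDup P Hnd2).
    + intros z Hz. apply Hlt. right. exact (Permutation_in _ P Hz).
    + rewrite (Permutation_length P). change (hids (Some (Node i k cs))) with (tids (Node i k cs)). rewrite tids_eq. simpl; lia.
    + rewrite (Permutation_length P). change (hids (Some (Node i k cs))) with (tids (Node i k cs)). rewrite tids_eq. simpl; lia.
Qed.
Open Scope R_scope.

Lemma ln2_pos : 0 < ln 2.
Proof. pose proof ln_lt_2. lra. Qed.

Lemma ln_le' x y : 0 < x -> x <= y -> ln x <= ln y.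
Proof. intros Hx [H|H]; [left; apply ln_increasing; auto|subst; lra]. Qed.

Lemma lg_le x y : 0 < x -> x <= y -> lg x <= lg y.
Proof. intros. unfold lg, Rdiv. apply Rmult_le_compat_r.
  left; apply Rinv_0_lt_compat, ln2_pos. apply ln_le'; auto. Qed.

Lemma lg_1 : lg 1 = 0.
Proof. unfold lg. rewrite ln_1. unfold Rdiv. ring. Qed.

Lemma lg_2x x : 0 < x -> lg (2 * x) = 1 + lg x.
Proof. intros. unfold lg. rewrite ln_mult by lra. field. pose proof ln2_pos. lra. Qed.

Lemma g0 N : (1 <= N)%nat -> 0 <= lg (INR N).
Proof. intros. rewrite <- lg_1. apply lg_le; [lra|]. apply (le_INR 1). auto. Qed.

Lemma g1 N : (2 <= N)%nat -> 1 <= lg (INR N).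
Proof. intros. replace 1 with (lg (2 * 1)) by (rewrite lg_2x, lg_1; lra).
  apply lg_le; [lra|]. replace (2*1) with (INR 2) by (simpl; lra). apply le_INR; auto. Qed.

Lemma gpos N : (1 <= N)%nat -> 0 < lg (INR N) -> (2 <= N)%nat.
Proof. intros H1 H. destruct (Nat.eq_dec N 1) as [E|E]; [|lia]. subst. simpl in H. rewrite lg_1 in H. lra. Qed.

Lemma lgs N s : (2 <= N)%nat -> (1 <= s)%nat -> (s <= 2 * N)%nat -> lg (INR s) <= 2 * lg (INR N).
Proof.
  intros H2 H1 H3. pose proof (g1 N H2).
  assert (0 < INR N) by (apply lt_0_INR; lia).
  apply Rle_trans with (lg (2 * INR N)).
  - apply lg_le. apply lt_0_INR; lia. replace (2 * INR N) with (INR (2 * N)) by (rewrite mult_INR; simpl; lra).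
    apply le_INR; auto.
  - rewrite lg_2x by auto. lra.
Qed.

Lemma mixed_aux B g L : 0 <= B -> (0 < g -> L <= 2 * g) -> B <= g -> 100 * (B / g) * L <= 200 * B.
Proof.
  intros HB HL Hg. destruct HB as [HB|HB].
  - assert (0 < g) by lra. specialize (HL H).
    assert (0 <= B / g) by (unfold Rdiv; apply Rmult_le_pos; [lra|left; apply Rinv_0_lt_compat; lra]).
    apply Rle_trans with (100 * (B / g) * (2 * g)).
    + apply Rmult_le_compat_l; [lra|exact HL].
    + right. field. lra.
  - subst. unfold Rdiv. rewrite Rmult_0_l. lra.
Qed.

Lemma pot_bound N : (1 <= N)%nat -> forall b, (bsize b < 2 * N)%nat ->
  tree_pot N b <= 400 * INR (bsize b) - 200 * Rmin (INR (bsize b)) (lg (INR N)).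
Proof.
  intros HN b. induction b as [|l IHl r IHr]; intros Hs.
  - simpl. rewrite Rmin_left. lra. apply g0; auto.
  - simpl bsize in Hs |- *. simpl tree_pot.
    specialize (IHl ltac:(lia)). specialize (IHr ltac:(lia)).
    pose proof (g0 N HN) as G0.
    set (g := lg (INR N)) in *.
    assert (LS : 0 < g -> lg (INR (S (bsize l + bsize r))) <= 2 * g).
    { intros Gp. apply lgs; [apply gpos; auto|lia|lia]. }
    match goal with |- context [if andb ?c1 ?c2 then ?x else ?y] =>
      assert (E : (if andb c1 c2 then x else y) <= 0) by (destruct (andb c1 c2); lra);
      revert E; generalize (if andb c1 c2 then x else y) end.
    intros ed E.
    assert (SE : INR (S (bsize l + bsize r)) = INR (bsize l) + INR (bsize r) + 1).
    { rewrite S_INR, plus_INR. reflexivity. }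
    pose proof (Rmin_r (INR (S (bsize l + bsize r))) g) as M1.
    pose proof (Rmin_l (INR (S (bsize l + bsize r))) g) as M2.
    pose proof (pos_INR (bsize l)). pose proof (pos_INR (bsize r)).
    unfold node_pot. fold g.
    destruct (Rlt_dec g (INR (bsize l))) as [Al|Al];
    destruct (Rlt_dec g (INR (bsize r))) as [Ar|Ar].
    + rewrite Rmin_right in IHl by lra. rewrite Rmin_right in IHr by lra.
      assert (Nb : (2 <= N)%nat).
      { assert (1 <= bsize l)%nat. { destruct (bsize l); [simpl in Al; lra|lia]. }
        assert (1 <= bsize r)%nat. { destruct (bsize r); [simpl in Ar; lra|lia]. } lia. }
      assert (L := lgs N (S (bsize l + bsize r)) Nb ltac:(lia) ltac:(lia)). fold g in L.
      lra.
    + rewrite Rmin_right in IHl by lra. rewrite Rmin_left in IHr by lra.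
      pose proof (mixed_aux (INR (bsize r)) g _ ltac:(lra) LS ltac:(lra)). lra.
    + rewrite Rmin_left in IHl by lra. rewrite Rmin_right in IHr by lra.
      pose proof (mixed_aux (INR (bsize l)) g _ ltac:(lra) LS ltac:(lra)). lra.
    + rewrite Rmin_left in IHl by lra. rewrite Rmin_left in IHr by lra. lra.
Qed.

Theorem lemma1 : exists C : R, forall (h : option tree) (N c : nat),
  reachable h N c ->
  Phi N h <= C * INR N /\ Phi N h <= C * (INR (hsize h) + 1).
Proof.
  exists 4000. intros h N c R.
  destruct (reach_inv _ _ _ R) as (_ & _ & H1 & H2 & H3).
  rewrite <- hsize_ids in H2, H3.
  assert (P := pot_bound N H1 (bin_heap h) H2). fold (hsize h) in P.
  pose proof (g0 N H1).
  assert (Mn : 0 <= Rmin (INR (hsize h)) (lg (INR N))) by (apply Rmin_glb; [apply pos_INR|auto]).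
  apply lt_INR in H2. apply le_INR in H3. rewrite mult_INR in H2. rewrite plus_INR, mult_INR in H3.
  simpl INR in H2, H3.
  pose proof (pos_INR (hsize h)). pose proof (pos_INR N).
  unfold Phi. fold (hsize h) in *.
  assert (A : Rabs (INR N - INR (hsize h)) <= INR N + INR (hsize h)).
  { unfold Rabs. destruct (Rcase_abs _); lra. }
  split; lra.
Qed.
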